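(* Let $M$ be a constant real $2n\times2n$ symmetric positive definite matrix such that $$\frac{Q+2}{4}\,\langle M\nabla_{\mathbb H}\phi_M,\nabla_{\mathbb H}\phi_M\rangle(x,t)=\phi_M(x,t)\,\mathcal L_M\phi_M(x,t)\quad\text{for all }(x,t)\in\mathbb R^{2n+1}.$$ Then $M$ is symplectic, i.e. $M^{-1}=J^tMJ$.
   Context: Points of $\mathbb R^{2n+1}$ are written $(x,t)$ with $x\in\mathbb R^{2n}$, $t\in\mathbb R$. Let $J=\begin{pmatrix}0&-\mathbb I_n\\ \mathbb I_n&0\end{pmatrix}$ and $Q=2n+2$. The horizontal vector fields are $X_i=\partial_{x_i}+2(Jx)_i\partial_t$, $i=1,\dots,2n$; $\nabla_{\mathbb H}\psi=(X_1\psi,\dots,X_{2n}\psi)$, $D^2_{\mathbb H}\psi=\big(\tfrac12(X_iX_j+X_jX_i)\psi\big)_{i,j}$, and $\mathcal L_M\psi=\mathrm{tr}(MD^2_{\mathbb H}\psi)$. For symmetric positive definite $M$, $\phi_M(x,t)=\langle M^{-1}x,x\rangle^2+t^2$. *)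

(* Defs.v *)
From Stdlib Require Import Reals Lra Lia Arith ClassicalEpsilon.
Open Scope R_scope.

Fixpoint rsum (k : nat) (f : nat -> R) : R :=
  match k with O => 0 | S k' => rsum k' f + f k' end.

(* The derivative of a real function at a point (0 if not differentiable;
   for the smooth functions considered here it is the usual derivative). *)
Definition Der (f : R -> R) (a : R) : R :=
  match excluded_middle_informative (exists l, derivable_pt_lim f a l) with
  | left H => proj1_sig (constructive_indefinite_description _ H)
  | right _ => 0
  end.

(* Points of R^{2n+1} are pairs (x,t) with x : nat -> R (only the
   coordinates 0..2n-1 are used) and t : R. *)
Definition upd (x : nat -> R) (i : nat) (s : R) : nat -> R :=
  fun j => if Nat.eqb j i then s else x j.

Definition Dx (i : nat) (f : (nat -> R) -> R -> R) : (nat -> R) -> R -> R :=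
  fun x t => Der (fun s => f (upd x i s) t) (x i).

Definition Dt (f : (nat -> R) -> R -> R) : (nat -> R) -> R -> R :=
  fun x t => Der (fun s => f x s) t.

(* J = [[0, -I_n], [I_n, 0]], indices 0..2n-1. *)
Definition Jmat (n : nat) (i j : nat) : R :=
  if (i <? n)%nat then (if Nat.eqb j (i + n) then -1 else 0)
  else if (i <? 2 * n)%nat then (if Nat.eqb (j + n) i then 1 else 0)
  else 0.

Definition Jx (n : nat) (x : nat -> R) (i : nat) : R :=
  rsum (2 * n) (fun j => Jmat n i j * x j).

Definition Xf (n i : nat) (f : (nat -> R) -> R -> R) : (nat -> R) -> R -> R :=
  fun x t => Dx i f x t + 2 * Jx n x i * Dt f x t.

Definition D2H (n i j : nat) (f : (nat -> R) -> R -> R) : (nat -> R) -> R -> R :=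
  fun x t => / 2 * (Xf n i (Xf n j f) x t + Xf n j (Xf n i f) x t).

Definition LM (n : nat) (M : nat -> nat -> R) (f : (nat -> R) -> R -> R)
  : (nat -> R) -> R -> R :=
  fun x t => rsum (2 * n) (fun i => rsum (2 * n) (fun j => M i j * D2H n j i f x t)).

Definition MgradH (n : nat) (M : nat -> nat -> R) (f : (nat -> R) -> R -> R)
  : (nat -> R) -> R -> R :=
  fun x t => rsum (2 * n) (fun i => rsum (2 * n)
               (fun j => M i j * Xf n j f x t * Xf n i f x t)).

Definition phiM (n : nat) (Minv : nat -> nat -> R) : (nat -> R) -> R -> R :=
  fun x t => (rsum (2 * n) (fun i => rsum (2 * n) (fun j => Minv i j * x j * x i))) ^ 2
             + t ^ 2.

Definition Qdim (n : nat) : R := 2 * INR n + 2.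

Definition delta (i j : nat) : R := if Nat.eqb i j then 1 else 0.

(* Main.v *)
Require Import Defs.
From Stdlib Require Import Reals Lra Lia Arith ClassicalEpsilon FunctionalExtensionality Setoid Morphisms.
Open Scope R_scope.

Lemma rsum_ext_lt k f g : (forall i, (i < k)%nat -> f i = g i) -> rsum k f = rsum k g.
Proof. induction k; simpl; intros H; auto. rewrite IHk by (intros; apply H; lia). rewrite H by lia. reflexivity. Qed.

#[export] Instance rsum_proper : Proper (eq ==> pointwise_relation nat eq ==> eq) rsum.
Proof. intros k k' <- f g H. apply rsum_ext_lt. intros; apply H. Qed.

Lemma rsum_plus k f g : rsum k (fun i => f i + g i) = rsum k f + rsum k g.
Proof. induction k; simpl; [lra| rewrite IHk; lra]. Qed.
Lemma rsum_scal k c f : rsum k (fun i => c * f i) = c * rsum k f.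
Proof. induction k; simpl; [lra| rewrite IHk; lra]. Qed.
Lemma rsum_scal_r k c f : rsum k (fun i => f i * c) = rsum k f * c.
Proof. induction k; simpl; [lra| rewrite IHk; lra]. Qed.
Lemma rsum_const k c : rsum k (fun _ => c) = INR k * c.
Proof. induction k; simpl rsum; [simpl; lra| rewrite IHk, S_INR; lra]. Qed.
Lemma rsum_swap k m f : rsum k (fun i => rsum m (fun j => f i j)) = rsum m (fun j => rsum k (fun i => f i j)).
Proof. induction k; simpl.
 - symmetry; induction m; simpl; [lra| rewrite IHm; lra].
 - rewrite IHk, <- rsum_plus. reflexivity. Qed.
Lemma rsum3 k a b c f g h : rsum k (fun i => a * f i + b * g i + c * h i) = a * rsum k f + b * rsum k g + c * rsum k h.
Proof. rewrite !rsum_plus, !rsum_scal. reflexivity. Qed.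

Lemma delta_sym i j : delta i j = delta j i.
Proof. unfold delta. rewrite Nat.eqb_sym. reflexivity. Qed.

Lemma rsum_delta k f i : (i < k)%nat -> rsum k (fun b => f b * delta b i) = f i.
Proof. induction k; intros H; [lia|]. simpl. destruct (Nat.eq_dec i k).
 - subst. rewrite (rsum_ext_lt k _ (fun _ => 0)).
   + rewrite rsum_const. unfold delta. rewrite Nat.eqb_refl. lra.
   + intros b Hb. unfold delta. replace (b =? k)%nat with false by (symmetry; apply Nat.eqb_neq; lia). lra.
 - rewrite IHk by lia. unfold delta. replace (k =? i)%nat with false by (symmetry; apply Nat.eqb_neq; lia). lra.
Qed.
Lemma rsum_delta' k f i : (i < k)%nat -> rsum k (fun b => delta i b * f b) = f i.
Proof. intros H. rewrite <- (rsum_delta k f i H). apply rsum_ext_lt. intros. rewrite delta_sym. ring. Qed.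

Lemma Der_eq f a l : derivable_pt_lim f a l -> Der f a = l.
Proof. intros H. unfold Der. destruct (excluded_middle_informative _) as [e|e].
 - destruct (constructive_indefinite_description _ e) as [l' Hl']. simpl. eapply uniqueness_limite; eauto.
 - exfalso; apply e; eauto. Qed.

Lemma dl_plus f g s0 lf lg : derivable_pt_lim f s0 lf -> derivable_pt_lim g s0 lg ->
  derivable_pt_lim (fun s => f s + g s) s0 (lf + lg).
Proof. intros; apply (derivable_pt_lim_plus f g); auto. Qed.
Lemma dl_mult f g s0 lf lg : derivable_pt_lim f s0 lf -> derivable_pt_lim g s0 lg ->
  derivable_pt_lim (fun s => f s * g s) s0 (lf * g s0 + f s0 * lg).
Proof. intros; apply (derivable_pt_lim_mult f g); auto. Qed.
Lemma dl_const c s0 : derivable_pt_lim (fun _ => c) s0 0.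
Proof. apply (derivable_pt_lim_const c). Qed.
Lemma dl_id s0 : derivable_pt_lim (fun s => s) s0 1.
Proof. apply derivable_pt_lim_id. Qed.
Lemma dl_ext f s0 l l' : derivable_pt_lim f s0 l -> l = l' -> derivable_pt_lim f s0 l'.
Proof. intros H <-; exact H. Qed.

Lemma dl_rsum k (F : nat -> R -> R) F' s0 : (forall a, (a < k)%nat -> derivable_pt_lim (F a) s0 (F' a)) ->
  derivable_pt_lim (fun s => rsum k (fun a => F a s)) s0 (rsum k F').
Proof. induction k; intros H; simpl.
 - apply dl_const.
 - apply (dl_plus (fun s => rsum k (fun a => F a s)) (F k)); [apply IHk; intros; apply H; lia | apply H; lia]. Qed.

Lemma dl_upd x i b s0 : derivable_pt_lim (fun s => upd x i s b) s0 (delta b i).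
Proof. unfold upd, delta. destruct (b =? i)%nat; [apply dl_id | apply dl_const]. Qed.

Lemma upd_same x i : upd x i (x i) = x.
Proof. apply functional_extensionality; intro j; unfold upd. destruct (Nat.eqb_spec j i); subst; auto. Qed.

Lemma dl_lin N c x i s0 : (i < N)%nat -> derivable_pt_lim (fun s => rsum N (fun b => c b * upd x i s b)) s0 (c i).
Proof. intros Hi. eapply dl_ext.
 - apply (dl_rsum N (fun b s => c b * upd x i s b)). intros. apply dl_mult; [apply dl_const | apply dl_upd].
 - rewrite <- (rsum_delta N c i Hi). apply rsum_ext_lt; intros; ring. Qed.

Definition Av (N : nat) (Minv : nat -> nat -> R) (y : nat -> R) (a : nat) : R := rsum N (fun b => Minv a b * y b).
Definition qf (N : nat) (Minv : nat -> nat -> R) (y : nat -> R) : R := rsum N (fun a => Av N Minv y a * y a).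

Lemma dl_Av N Minv x i a s0 : (i < N)%nat -> derivable_pt_lim (fun s => Av N Minv (upd x i s) a) s0 (Minv a i).
Proof. intros; unfold Av; apply dl_lin; auto. Qed.

Lemma dl_Jx n x i a s0 : (i < 2*n)%nat -> derivable_pt_lim (fun s => Jx n (upd x i s) a) s0 (Jmat n a i).
Proof. intros; unfold Jx; apply dl_lin; auto. Qed.

Lemma dl_q N Minv x i : (i < N)%nat -> (forall a b, (a < N)%nat -> (b < N)%nat -> Minv a b = Minv b a) ->
  derivable_pt_lim (fun s => qf N Minv (upd x i s)) (x i) (2 * Av N Minv x i).
Proof. intros Hi Hs. eapply dl_ext.
 - apply (dl_rsum N (fun a s => Av N Minv (upd x i s) a * upd x i s a)). intros.
   apply dl_mult; [apply dl_Av; auto | apply dl_upd].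
 - simpl. rewrite upd_same, rsum_plus, rsum_delta by auto. unfold Av.
   rewrite (rsum_ext_lt N _ (fun b => Minv i b * x b)) by (intros; rewrite Hs; auto). ring. Qed.

Lemma J_anti n i j : Jmat n i j = - Jmat n j i.
Proof. unfold Jmat.
 destruct (Nat.ltb_spec i n); destruct (Nat.ltb_spec j n);
 destruct (Nat.ltb_spec i (2*n)); destruct (Nat.ltb_spec j (2*n));
 destruct (Nat.eqb_spec j (i+n)); destruct (Nat.eqb_spec i (j+n));
 destruct (Nat.eqb_spec (j+n) i); destruct (Nat.eqb_spec (i+n) j); try lia; lra. Qed.

Lemma Der_eq' f g a l : (forall s, f s = g s) -> derivable_pt_lim g a l -> Der f a = l.
Proof. intros H1 H2. replace f with g by (apply functional_extensionality; intros; auto). apply Der_eq; auto. Qed.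

Lemma phi_eq n Minv y t : phiM n Minv y t = qf (2*n) Minv y * qf (2*n) Minv y + t * t.
Proof. unfold phiM, qf, Av.
 assert (E: rsum (2 * n) (fun i => rsum (2 * n) (fun j => Minv i j * y j * y i)) =
   rsum (2 * n) (fun a => rsum (2 * n) (fun b => Minv a b * y b) * y a)).
 { apply rsum_ext_lt; intros. rewrite <- rsum_scal_r. reflexivity. }
 rewrite E. ring. Qed.

Definition Gf n Minv i (y : nat -> R) (t : R) := 4 * qf (2*n) Minv y * Av (2*n) Minv y i + 4 * t * Jx n y i.




Lemma Xphi n Minv (Hs : forall a b, (a < 2*n)%nat -> (b < 2*n)%nat -> Minv a b = Minv b a) i :
  (i < 2*n)%nat -> Xf n i (phiM n Minv) = Gf n Minv i.
Proof. intros Hi. apply functional_extensionality; intro y; apply functional_extensionality; intro t.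
 unfold Xf, Defs.Dx, Defs.Dt, Gf.
 rewrite (Der_eq' _ (fun s => qf (2*n) Minv (upd y i s) * qf (2*n) Minv (upd y i s) + t * t) _
   ((2 * Av (2*n) Minv y i) * qf (2*n) Minv y + qf (2*n) Minv y * (2 * Av (2*n) Minv y i) + 0)).
 2:{ intros; apply phi_eq. }
 2:{ eapply dl_ext. apply dl_plus; [apply dl_mult; apply dl_q; auto | apply dl_const].
     simpl. rewrite upd_same. ring. }
 rewrite (Der_eq' _ (fun s => qf (2*n) Minv y * qf (2*n) Minv y + s * s) _ (0 + (1 * t + t * 1))).
 2:{ intros; apply phi_eq. }
 2:{ apply dl_plus; [apply dl_const | apply dl_mult; apply dl_id]. }
 ring. Qed.

Lemma XXphi n Minv (Hs : forall a b, (a < 2*n)%nat -> (b < 2*n)%nat -> Minv a b = Minv b a) i j y t :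
  (i < 2*n)%nat -> (j < 2*n)%nat ->
  Xf n j (Xf n i (phiM n Minv)) y t =
  4 * (2 * Av (2*n) Minv y j * Av (2*n) Minv y i + qf (2*n) Minv y * Minv i j) + 4 * t * Jmat n i j
  + 2 * Jx n y j * (4 * Jx n y i).
Proof. intros Hi Hj. rewrite Xphi by auto. unfold Xf, Defs.Dx, Defs.Dt, Gf.
 rewrite (Der_eq _ (y j) (0 * qf (2*n) Minv y * Av (2*n) Minv y i + 4 * (2 * Av (2*n) Minv y j) * Av (2*n) Minv y i
     + 4 * qf (2*n) Minv y * Minv i j + (0 * Jx n y i + 4 * t * Jmat n i j))).
 2:{ eapply dl_ext. apply dl_plus.
     - apply dl_mult; [apply dl_mult; [apply dl_const | apply dl_q; auto] | apply dl_Av; auto].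
     - apply dl_mult; [apply dl_const | apply dl_Jx; auto].
     - simpl. rewrite upd_same. ring. }
 rewrite (Der_eq _ t (0 + ((0 * t + 4 * 1) * Jx n y i + 4 * t * 0))).
 2:{ apply dl_plus; [apply dl_const | apply dl_mult; [apply dl_mult; [apply dl_const | apply dl_id] | apply dl_const]]. }
 ring. Qed.

Theorem lemma3p2 (n : nat) (M Minv : nat -> nat -> R)
  (Hsym : forall i j, (i < 2 * n)%nat -> (j < 2 * n)%nat -> M i j = M j i)
  (Hpos : forall v : nat -> R, (exists i, (i < 2 * n)%nat /\ v i <> 0) ->
          0 < rsum (2 * n) (fun i => rsum (2 * n) (fun j => v i * M i j * v j)))
  (Hinv_r : forall i j, (i < 2 * n)%nat -> (j < 2 * n)%nat ->
          rsum (2 * n) (fun k => M i k * Minv k j) = delta i j)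
  (Hinv_l : forall i j, (i < 2 * n)%nat -> (j < 2 * n)%nat ->
          rsum (2 * n) (fun k => Minv i k * M k j) = delta i j)
  (Heq : forall (x : nat -> R) (t : R),
          (Qdim n + 2) / 4 * MgradH n M (phiM n Minv) x t
          = phiM n Minv x t * LM n M (phiM n Minv) x t) :
  forall i j, (i < 2 * n)%nat -> (j < 2 * n)%nat ->
    Minv i j = rsum (2 * n) (fun k => rsum (2 * n)
                 (fun l => Jmat n k i * M k l * Jmat n l j)).
Proof.
  set (N := (2 * n)%nat) in *.
  assert (Hs : forall a b, (a < N)%nat -> (b < N)%nat -> Minv a b = Minv b a).
  { intros a b Ha Hb.
    set (T := rsum N (fun l => rsum N (fun k => Minv k a * M k l * Minv l b))).
    assert (T1 : T = Minv a b).
    { unfold T. rewrite (rsum_ext_lt N _ (fun l => Minv l b * delta l a)).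
      - apply (rsum_delta N (fun l => Minv l b)); auto.
      - intros l Hl. rewrite rsum_scal_r, Rmult_comm. f_equal. rewrite <- (Hinv_r l a) by auto.
        apply rsum_ext_lt; intros k Hk. rewrite (Hsym k l) by auto. ring. }
    assert (T2 : T = Minv b a).
    { unfold T. rewrite rsum_swap. rewrite (rsum_ext_lt N _ (fun k => Minv k a * delta k b)).
      - apply (rsum_delta N (fun k => Minv k a) b); auto.
      - intros k Hk. rewrite <- (Hinv_r k b) by auto. rewrite <- rsum_scal.
        apply rsum_ext_lt; intros. ring. }
    congruence. }
  set (q := fun y => qf N Minv y).
  set (Avf := fun y a => Av N Minv y a).
  set (p := fun y => rsum N (fun i => rsum N (fun j => M i j * (Jx n y i * Jx n y j)))).
  assert (Ha : forall y, rsum N (fun i => rsum N (fun j => M i j * (Avf y i * Avf y j))) = q y).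
  { intros y. unfold q, qf. apply rsum_ext_lt. intros i Hi.
    rewrite (rsum_ext_lt N _ (fun j => Avf y i * (M i j * Avf y j))) by (intros; ring).
    rewrite rsum_scal. unfold Avf. f_equal.
    unfold Av. rewrite (rsum_ext_lt N _ (fun j => rsum N (fun b => M i j * Minv j b * y b))).
    2:{ intros j Hj. rewrite <- rsum_scal. apply rsum_ext_lt; intros; ring. }
    rewrite rsum_swap. rewrite <- (rsum_delta' N y i Hi). apply rsum_ext_lt. intros b Hb.
    rewrite rsum_scal_r, Hinv_r by auto. reflexivity. }
  assert (Hc : rsum N (fun i => rsum N (fun j => M i j * Minv i j)) = 2 * INR n).
  { rewrite (rsum_ext_lt N _ (fun _ => 1)).
    - rewrite rsum_const. unfold N. rewrite mult_INR. simpl. ring.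
    - intros i Hi. transitivity (delta i i). 2:{ unfold delta; rewrite Nat.eqb_refl; auto. }
      rewrite <- (Hinv_r i i) by auto. apply rsum_ext_lt; intros. rewrite (Hs i) by auto. reflexivity. }
  assert (HD : forall y t i j, (i < N)%nat -> (j < N)%nat ->
     M i j * D2H n j i (phiM n Minv) y t = 8 * (M i j * (Avf y i * Avf y j)) + 4 * q y * (M i j * Minv i j)
        + 8 * (M i j * (Jx n y i * Jx n y j))).
  { intros y t i j Hi Hj. unfold D2H. rewrite !XXphi by auto. rewrite (Hs j i) by auto.
    rewrite (J_anti n j i). unfold q, Avf, N. field. }
  assert (HL : forall y t, LM n M (phiM n Minv) y t = 8 * q y + 4 * q y * (2 * INR n) + 8 * p y).
  { intros y t. unfold LM. fold N.
    rewrite (rsum_ext_lt N _ (fun i => 8 * rsum N (fun j => M i j * (Avf y i * Avf y j)) +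
        4 * q y * rsum N (fun j => M i j * Minv i j) + 8 * rsum N (fun j => M i j * (Jx n y i * Jx n y j)))).
    - rewrite rsum3, Ha, Hc. reflexivity.
    - intros i Hi. rewrite <- rsum3. apply rsum_ext_lt. intros j Hj. apply HD; auto. }
  assert (HMg : forall y t, MgradH n M (phiM n Minv) y t = 16 * (q y * q y) * rsum N (fun i => rsum N (fun j => M i j * (Avf y i * Avf y j)))
       + 16 * (q y * t) * rsum N (fun i => rsum N (fun j => M i j * (Avf y j * Jx n y i + Jx n y j * Avf y i)))
       + 16 * (t * t) * rsum N (fun i => rsum N (fun j => M i j * (Jx n y i * Jx n y j)))).
  { intros y t. unfold MgradH. fold N.
    rewrite <- rsum3. apply rsum_ext_lt. intros i Hi. rewrite <- rsum3. apply rsum_ext_lt. intros j Hj.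
    rewrite !Xphi by auto. unfold Gf, q, Avf, N. ring. }
  assert (Hpq : forall y, p y = q y).
  { intros y. pose proof (Heq y 0) as E0. pose proof (Heq y 1) as E1. pose proof (Heq y (-1)) as E2.
    rewrite !phi_eq, !HL, !HMg, Ha in *. fold (p y) in *. fold (q y) in E0, E1, E2. unfold Qdim in *.
    set (m := rsum N _) in *. set (qq := q y) in *. set (pp := p y) in *.
    assert (Hn : 0 <= INR n) by apply pos_INR.
    assert (K : (INR n + 1) * (pp - qq) = 0) by nra.
    apply Rmult_integral in K. destruct K; lra. }
  set (B := fun x y => rsum N (fun k => rsum N (fun l => Jmat n k x * M k l * Jmat n l y))).
  assert (HB : forall x y, (x < N)%nat -> (y < N)%nat -> B x y = B y x).
  { intros x y Hx Hy. unfold B. rewrite (rsum_swap N N (fun k l => Jmat n k y * M k l * Jmat n l x)).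
    apply rsum_ext_lt; intros k Hk. apply rsum_ext_lt; intros l Hl. rewrite (Hsym l k) by auto. ring. }
  assert (Hpol : forall u v, (u < N)%nat -> (v < N)%nat ->
     Minv u u + Minv u v + Minv v u + Minv v v = B u u + B u v + B v u + B v v).
  { intros u v Hu Hv. set (w := fun j => delta j u + delta j v).
    assert (Jw : forall i, Jx n w i = Jmat n i u + Jmat n i v).
    { intros i. unfold Jx, w. fold N.
      rewrite (rsum_ext_lt N _ (fun j => Jmat n i j * delta j u + Jmat n i j * delta j v)) by (intros; ring).
      rewrite rsum_plus, !rsum_delta by auto. reflexivity. }
    assert (Aw : forall a, Avf w a = Minv a u + Minv a v).
    { intros a. unfold Avf, Av, w.
      rewrite (rsum_ext_lt N _ (fun j => Minv a j * delta j u + Minv a j * delta j v)) by (intros; ring).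
      rewrite rsum_plus, !rsum_delta by auto. reflexivity. }
    transitivity (q w).
    - unfold q, qf. fold (Avf w).
      rewrite (rsum_ext_lt N _ (fun a => (Minv a u + Minv a v) * delta a u + (Minv a u + Minv a v) * delta a v))
        by (intros; rewrite Aw; unfold w; ring).
      rewrite rsum_plus, (rsum_delta N (fun a => Minv a u + Minv a v)), (rsum_delta N (fun a => Minv a u + Minv a v)) by auto.
      rewrite (Hs u v), (Hs v u) by auto. ring.
    - rewrite <- Hpq. unfold p, B.
      rewrite (rsum_ext_lt N _ (fun i => rsum N (fun l => Jmat n i u * M i l * Jmat n l u) + rsum N (fun l => Jmat n i u * M i l * Jmat n l v)
          + rsum N (fun l => Jmat n i v * M i l * Jmat n l u) + rsum N (fun l => Jmat n i v * M i l * Jmat n l v))).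
      + rewrite !rsum_plus. reflexivity.
      + intros i Hi. rewrite <- !rsum_plus. apply rsum_ext_lt; intros j Hj. rewrite !Jw. ring. }
  intros i j Hi Hj. fold (B i j).
  pose proof (Hpol i i Hi Hi). pose proof (Hpol j j Hj Hj). pose proof (Hpol i j Hi Hj).
  rewrite (Hs j i), (HB j i) in * by auto. lra.
Qed.
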